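(* Let $n\ge1$ and let $V^i=V^i(u)$, $i=1,\dots,n$, be smooth functions. Consider the conservative hydrodynamic type system $u^i_t=(V^i(u))_x$ written in potential coordinates $b^i$ with $b^i_x=u^i$ as $F^i=b^i_t-V^i(b_x)=0$. Let $C$ be a second-order homogeneous Hamiltonian operator in canonical form $C^{ij}=\partial_x g^{ij}\partial_x$, where $(g^{ij})$ is the inverse of the nondegenerate matrix $g_{ij}=T_{ijk}u^k+g_{0ij}$ with $T_{ijk}$, $g_{0ij}$ constants skew-symmetric with respect to any pair of indices; in potential coordinates $C$ becomes the operator of order zero $C^{ij}=-g^{ij}(b_x)$, i.e. $C(\mathbf p)^i=-g^{ij}p_j$. Then the compatibility condition $\ell_F(C(\mathbf p))=0$ on the cotangent covering holds if and only if, for all indices, $$g_{qj}V^j_{,p}+g_{pj}V^j_{,q}=0,\qquad g_{qk}V^k_{,pl}+g_{pq,k}V^k_{,l}+g_{qk,l}V^k_{,p}=0 .$$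
   Context: Summation over repeated indices is understood; an index after a comma denotes partial derivative with respect to $u^k=b^k_x$, e.g. $V^j_{,p}=\partial V^j/\partial u^p$, $V^k_{,pl}=\partial^2V^k/\partial u^p\partial u^l$, $g_{pq,k}=\partial g_{pq}/\partial u^k$. The linearization of $F$ is $\ell_F(\varphi)^i=D_t\varphi^i-V^i_{,j}D_x\varphi^j$ ($D_t,D_x$ total derivatives). The cotangent covering is the system in $b^i$ and new odd variables $p_i$: $b^i_t=V^i(b_x)$, $p_{i,t}=V^j_{,i}p_{j,x}+V^j_{,il}b^l_{xx}p_j$. The condition $\ell_F(C(\mathbf p))=0$ on the cotangent covering means the expression vanishes identically in the jet variables after eliminating $b_t,p_t$ and their derivatives via the covering equations. *)

(* Defs.v *)
From HB Require Import structures.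
From mathcomp Require Import all_boot all_order all_algebra.
From mathcomp Require Import all_classical all_reals all_analysis.
Set Implicit Arguments. Unset Strict Implicit. Unset Printing Implicit Defensive.
Import Order.TTheory GRing.Theory Num.Theory.
Import numFieldNormedType.Exports.
Local Open Scope ring_scope.

Section Jet.
Variables (R : realType) (n : nat).

Definition pd (f : 'rV[R]_n -> R) (k : 'I_n) (u : 'rV[R]_n) : R :=
  'D_(delta_mx 0 k) f u.

Fixpoint iterpd (s : seq 'I_n) (f : 'rV[R]_n -> R) : 'rV[R]_n -> R :=
  match s with
  | [::] => f
  | k :: s' => pd (iterpd s' f) k
  end.

Definition smooth (f : 'rV[R]_n -> R) : Prop :=
  forall (s : seq 'I_n) (u : 'rV[R]_n), differentiable (iterpd s f) u.

(* Jet functions on the cotangent covering depending on u0 = b_x and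
   P0 = p (the odd fibre variables, treated as commuting real coordinates;
   all expressions involved are linear in p).  Remaining jet coordinates
   used: u1 = b_xx, P1 = p_x. *)
Definition jetfun := 'rV[R]_n -> 'rV[R]_n -> R.

Definition Dx (phi : jetfun) (u0 u1 P0 P1 : 'rV[R]_n) : R :=
  \sum_(l < n) pd (phi ^~ P0) l u0 * u1 0 l
  + \sum_(j < n) pd (phi u0) j P0 * P1 0 j.

(* total t-derivative D_t on the cotangent covering, after eliminating
   b_t, p_t and their derivatives:
     b^k_{xt} = D_x (V^k(b_x)),
     p_{i,t} = V^j_{,i} p_{j,x} + V^j_{,il} b^l_{xx} p_j. *)
Definition Dt_cov (V : 'I_n -> 'rV[R]_n -> R) (phi : jetfun)
    (u0 u1 P0 P1 : 'rV[R]_n) : R :=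
  \sum_(k < n) pd (phi ^~ P0) k u0 * Dx (fun u _ => V k u) u0 u1 P0 P1
  + \sum_(i < n) pd (phi u0) i P0 *
      (\sum_(j < n) pd (V j) i u0 * P1 0 j
       + \sum_(j < n) \sum_(l < n) pd (pd (V j) i) l u0 * u1 0 l * P0 0 j).

Definition ellF_cov (V : 'I_n -> 'rV[R]_n -> R) (phi : 'I_n -> jetfun)
    (i : 'I_n) (u0 u1 P0 P1 : 'rV[R]_n) : R :=
  Dt_cov V (phi i) u0 u1 P0 P1
  - \sum_(j < n) pd (V i) j u0 * Dx (phi j) u0 u1 P0 P1.

Definition gmetric (T : 'I_n -> 'I_n -> 'I_n -> R) (g0 : 'M[R]_n)
    (u : 'rV[R]_n) : 'M[R]_n :=
  \matrix_(i, j) (\sum_(k < n) T i j k * u 0 k + g0 i j).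

Definition Cop (G : 'rV[R]_n -> 'M[R]_n) (i : 'I_n) : jetfun :=
  fun u0 P0 => - \sum_(j < n) (invmx (G u0)) i j * P0 0 j.

End Jet.

(* Main.v *)
Require Import Defs.
From HB Require Import structures.
From mathcomp Require Import all_boot all_order all_algebra.
From mathcomp Require Import all_classical all_reals all_analysis.
From mathcomp Require Import ring.
Import Order.TTheory GRing.Theory Num.Theory.
Import numFieldNormedType.Exports.
Local Open Scope ring_scope.

Section A.
Local Open Scope classical_set_scope.
Local Open Scope ring_scope.
Variables (R : realType) (n : nat).

Lemma pd_lim (f : 'rV[R]_n -> R) k u (c : R) (Q : R -> R) :
  (\forall t \near (0:R)^', t^-1 * (f (t *: delta_mx 0 k + u) - f u) = Q t) ->
  (Q @ (0:R)^') --> c -> pd f k u = c.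
Proof.
move=> hQ cQ; rewrite /pd /derive; apply: cvg_lim; first exact: Rhausdorff.
have e : (fun h : R => h^-1 *: ((f \o shift u) (h *: delta_mx 0 k) - f u)) = (fun t => t^-1 * (f (t *: delta_mx 0 k + u) - f u)) by [].
rewrite e; apply: cvg_trans cQ; apply: near_eq_cvg; near=> t.
by rewrite /= (near hQ t).
Unshelve. all: by end_near. Qed.

Lemma pd_lin (f : 'rV[R]_n -> R) k u (c : R) :
  (forall t, f (t *: delta_mx 0 k + u) - f u = t * c) -> pd f k u = c.
Proof.
move=> h; apply: (@pd_lim _ _ _ _ (fun _ => c)); last exact: cvg_cst.
near=> t; rewrite h mulrA mulVf ?mul1r //.
apply: (near (nbhs_dnbhs_neq 0) t) => //.
Unshelve. all: by end_near. Qed.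

Lemma cvg_sumR (I : finType) (Fl : set_system R) (FF : Filter Fl)
   (F : I -> R -> R) (L : I -> R) :
  (forall i, F i @ Fl --> L i) -> (fun t => \sum_i F i t) @ Fl --> \sum_i L i.
Proof.
move=> h; apply: cvg_big => //; first exact: add_continuous.

Qed.

Definition Ap (g M : 'M[R]_n) : 'M[{poly R}]_n :=
  \matrix_(i, j) ((g i j)%:P + (M i j)%:P * 'X).

Lemma Ap_eval g M t : map_mx (horner_eval t) (Ap g M) = g + t *: M.
Proof.
apply/matrixP => i j; rewrite !mxE /horner_eval /=.
by rewrite hornerD hornerM hornerX !hornerC mulrC.
Qed.

Lemma det_line g M t : \det (g + t *: M) = (\det (Ap g M)).[t].
Proof. by rewrite -Ap_eval det_map_mx. Qed.

Lemma adj_line g M t i j : \adj (g + t *: M) i j = (\adj (Ap g M) i j).[t].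
Proof. by rewrite -Ap_eval -map_mx_adj mxE. Qed.


Lemma scale_entry (c : R) (A : 'M[R]_n) i j : (c *: A) i j = c * A i j.
Proof. by rewrite mxE. Qed.

Lemma inv_line_mx (g M : 'M[R]_n) t : g \in unitmx -> g + t *: M \in unitmx ->
  invmx (g + t *: M) - invmx g = - t *: (invmx (g + t *: M) *m M *m invmx g).
Proof.
move=> gu Au.
have e1 : invmx (g + t *: M) = invmx (g + t *: M) *m g *m invmx g.
  by rewrite -mulmxA mulmxV // mulmx1.
have e2 : invmx g = invmx (g + t *: M) *m (g + t *: M) *m invmx g.
  by rewrite mulVmx // mul1mx.
rewrite {1}e1 {2}e2 -mulmxBl -mulmxBr.
by rewrite opprD addrA subrr add0r -scaleNr -scalemxAr -scalemxAl.
Qed.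

Lemma inv_line_entry (g M : 'M[R]_n) t i j : g \in unitmx -> g + t *: M \in unitmx ->
  invmx (g + t *: M) i j - invmx g i j
  = - t * \sum_b (\sum_a invmx (g + t *: M) i a * M a b) * invmx g b j.
Proof.
move=> gu Au; have := congr1 (fun X : 'M[R]_n => X i j) (@inv_line_mx g M t gu Au).
rewrite /= !mxE => ->; congr (_ * _).
by apply: eq_bigr => b _; rewrite !mxE.
Qed.

Lemma inv_line (g M : 'M[R]_n) (w : 'I_n -> R) i : g \in unitmx ->
  (fun t => t^-1 * (\sum_j invmx (g + t *: M) i j * w j
                   - \sum_j invmx g i j * w j)) @ (0:R)^'
  --> - \sum_j (\sum_b (\sum_a invmx g i a * M a b) * invmx g b j) * w j.
Proof.
move=> gu.
set p := \det (Ap g M).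
have e0 : g = g + 0 *: M by rewrite scale0r addr0.
have p0 : p.[0] != 0 by rewrite -det_line -e0 -unitfE -unitmxE.
have pn : \forall t \near (0:R), p.[t] != 0.
  have h1 : horner p @ (0:R) --> p.[0] by exact: continuous_horner.
  exact: (cvgr_neq0 _ h1 p0).
have Hc : forall a b, (fun t => invmx (g + t *: M) a b) @ (0:R) --> invmx g a b.
  move=> a b.
  have L : (fun t => (\adj (Ap g M) a b).[t] * (p.[t])^-1) @ (0:R)
      --> (\adj (Ap g M) a b).[0] * (p.[0])^-1.
    apply: cvgM; first exact: continuous_horner.
    apply: cvgV => //; exact: continuous_horner.
  have -> : invmx g a b = (\adj (Ap g M) a b).[0] * (p.[0])^-1.
    by rewrite {1}e0 /invmx unitmxE unitfE det_line p0 /= scale_entry adj_line mulrC.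
  have N : {near (0:R), (fun t => (\adj (Ap g M) a b).[t] * (p.[t])^-1) =1
                         (fun t => invmx (g + t *: M) a b)}.
    near=> t.
    rewrite /= /invmx unitmxE unitfE det_line; case: ifP => [_|]; last by rewrite (near pn t).
    by rewrite scale_entry adj_line mulrC.
  exact: (cvg_trans (near_eq_cvg N) L).
have Q : {near (0:R)^', 
   (fun t => - \sum_j (\sum_b (\sum_a invmx (g + t *: M) i a * M a b) * invmx g b j) * w j) =1
   (fun t => t^-1 * (\sum_j invmx (g + t *: M) i j * w j
                   - \sum_j invmx g i j * w j))}.
  near=> t => /=; symmetry.
  have tn : t != 0 by apply: (near (nbhs_dnbhs_neq 0) t).
  have Au : g + t *: M \in unitmx.
    by rewrite unitmxE unitfE det_line; apply: (near (cvg_within _ pn) t).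
  rewrite -sumrB mulr_sumr -sumrN; apply: eq_bigr => j _.
  rewrite -mulrBl inv_line_entry // mulrA mulNr mulrN mulrA mulVf // mul1r.
  by rewrite mulNr.
apply: (cvg_trans (near_eq_cvg Q)).
apply: cvgN; apply: cvg_sumR => j; apply: cvgMr_tmp.
apply: cvg_sumR => b; apply: cvgMr_tmp.
apply: cvg_sumR => a; apply: cvgMr_tmp.
exact: cvg_within_filter (Hc i a).
Unshelve. all: by end_near. Qed.

Lemma sum_delta (a : 'I_n -> R) m : \sum_j a j * (delta_mx 0 m : 'rV[R]_n) 0 j = a m.
Proof.
rewrite (bigD1 m) //= mxE !eqxx mulr1 big1 ?addr0 // => j jm.
by rewrite mxE eqxx /= (negbTE jm) mulr0.
Qed.

Lemma sum_eqR (a : 'I_n -> R) k : \sum_m a m * (m == k)%:R = a k.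
Proof.
rewrite (bigD1 k) //= eqxx mulr1 big1 ?addr0 // => j jk.
by rewrite (negbTE jk) mulr0.
Qed.

Lemma sum_eqL (a : 'I_n -> R) k : \sum_m a m * (k == m)%:R = a k.
Proof. by under eq_bigr => m _ do rewrite eq_sym; exact: sum_eqR. Qed.

Definition Tm (T : 'I_n -> 'I_n -> 'I_n -> R) k : 'M[R]_n := \matrix_(a, b) T a b k.

Lemma gmetric_line T g0 k t u :
  gmetric T g0 (t *: delta_mx 0 k + u) = gmetric T g0 u + t *: Tm T k.
Proof.
apply/matrixP => a b; rewrite !mxE -addrA (addrC (g0 a b)) addrA; congr (_ + _).
under eq_bigr => m _ do rewrite !mxE mulrDr.
rewrite big_split /= addrC; congr (_ + _).
under eq_bigr => m _ do rewrite mulrCA.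
by rewrite -mulr_sumr sum_eqR mulrC.
Qed.

Lemma pd_gmetric (T : 'I_n -> 'I_n -> 'I_n -> R) (g0 : 'M[R]_n) p q k u : pd (fun v => gmetric T g0 v p q) k u = T p q k.
Proof.
apply: pd_lin => t; rewrite gmetric_line mxE scale_entry mxE.
by rewrite addrAC subrr add0r mxE.
Qed.

Lemma pd_cst (c : R) k (u : 'rV[R]_n) : pd (fun _ => c) k u = 0.
Proof. by apply: pd_lin => t; rewrite subrr mulr0. Qed.

Lemma pd_Cop_P (T : 'I_n -> 'I_n -> 'I_n -> R) (g0 : 'M[R]_n) i (u0 P0 : 'rV[R]_n) m :
  pd (Cop (gmetric T g0) i u0) m P0 = - invmx (gmetric T g0 u0) i m.
Proof.
apply: pd_lin => t; rewrite /Cop opprK addrC -sumrB.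
under eq_bigr => j _ do rewrite -mulrBr !mxE opprD addrCA subrr addr0 eqxx /= mulrN mulrCA.
by rewrite sumrN -mulr_sumr sum_eqR mulrN.
Qed.

Lemma pd_Cop_u (T : 'I_n -> 'I_n -> 'I_n -> R) (g0 : 'M[R]_n) i (u0 P0 : 'rV[R]_n) l : gmetric T g0 u0 \in unitmx ->
  pd (Cop (gmetric T g0) i ^~ P0) l u0 =
  \sum_j (\sum_b (\sum_a invmx (gmetric T g0 u0) i a * Tm T l a b)
      * invmx (gmetric T g0 u0) b j) * P0 0 j.
Proof.
move=> gu.
pose Qf := fun t : R => - (t^-1 * (\sum_j invmx (gmetric T g0 u0 + t *: Tm T l) i j * P0 0 j
                   - \sum_j invmx (gmetric T g0 u0) i j * P0 0 j)).
apply: (@pd_lim _ _ _ _ Qf).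
  near=> t; rewrite /Qf /Cop gmetric_line -mulrN opprB opprK addrC.
  by rewrite [X in _ * X]addrC.
rewrite -[X in _ --> X]opprK.
exact: (cvgN (@inv_line _ (Tm T l) (fun j => P0 0 j) i gu)).
Unshelve. all: by end_near. Qed.

Section C.
Variables (h D : 'I_n -> 'I_n -> R) (K W : 'I_n -> 'I_n -> 'I_n -> R) (u1 P0 P1 : 'I_n -> R) (i : 'I_n).
Lemma T1E :
  \sum_k (\sum_j K k i j * P0 j) * (\sum_l D k l * u1 l + \sum_j 0 * P1 j)
  = \sum_l \sum_b u1 l * P0 b * \sum_k K k i b * D k l.
Proof.
have Z : \sum_j (0:R) * P1 j = 0 by rewrite big1 // => j _; rewrite mul0r.
rewrite Z; under eq_bigr => k _ do rewrite addr0 mulr_suml.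
under eq_bigr => k _ do under eq_bigr => j _ do rewrite mulr_sumr.
under [RHS]eq_bigr => l _ do under eq_bigr => b _ do rewrite mulr_sumr.
rewrite exchange_big /=.
under eq_bigr => j _ do rewrite exchange_big /=.
rewrite exchange_big /=.
apply: eq_bigr => l _; apply: eq_bigr => b _; apply: eq_bigr => k _; ring.
Qed.

Lemma T2E :
  \sum_m (- h i m) * (\sum_j D j m * P1 j + \sum_j \sum_l W j m l * u1 l * P0 j)
  = - \sum_b P1 b * (\sum_m h i m * D b m)
    - \sum_l \sum_b u1 l * P0 b * \sum_m h i m * W b m l.
Proof.
under eq_bigr => m _ do rewrite mulrDr.
rewrite big_split /= -!sumrN; congr (_ + _).
  under eq_bigr => m _ do rewrite mulr_sumr.
  rewrite exchange_big /=; apply: eq_bigr => b _.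
  rewrite mulr_sumr -sumrN; apply: eq_bigr => m _; ring.
under eq_bigr => m _ do rewrite mulr_sumr.
under eq_bigr => m _ do under eq_bigr => j _ do rewrite mulr_sumr.
under [RHS]eq_bigr => l _ do rewrite -sumrN.
under [RHS]eq_bigr => l _ do under eq_bigr => b _ do rewrite mulr_sumr -sumrN.
rewrite exchange_big /=.
under eq_bigr => j _ do rewrite exchange_big /=.
rewrite exchange_big /=.
apply: eq_bigr => l _; apply: eq_bigr => b _; apply: eq_bigr => m _; ring.
Qed.

Lemma T3E :
  \sum_j D i j * (\sum_l (\sum_c K l j c * P0 c) * u1 l + \sum_m (- h j m) * P1 m)
  = \sum_l \sum_b u1 l * P0 b * (\sum_j D i j * K l j b)
    - \sum_b P1 b * (\sum_j D i j * h j b).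
Proof.
under eq_bigr => j _ do rewrite mulrDr.
rewrite big_split /= -sumrN; congr (_ + _).
  under eq_bigr => j _ do rewrite mulr_sumr.
  under eq_bigr => j _ do under eq_bigr => l _ do rewrite mulr_suml mulr_sumr.
  rewrite exchange_big /=; apply: eq_bigr => l _.
  rewrite exchange_big /=; apply: eq_bigr => b _.
  rewrite mulr_sumr; apply: eq_bigr => j _; ring.
under eq_bigr => j _ do rewrite mulr_sumr.
rewrite exchange_big /=; apply: eq_bigr => b _.
rewrite mulr_sumr -sumrN; apply: eq_bigr => j _; ring.
Qed.

Lemma regroup :
  \sum_k (\sum_j K k i j * P0 j) * (\sum_l D k l * u1 l + \sum_j 0 * P1 j)
  + \sum_m (- h i m) * (\sum_j D j m * P1 j + \sum_j \sum_l W j m l * u1 l * P0 j)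
  - \sum_j D i j * (\sum_l (\sum_c K l j c * P0 c) * u1 l + \sum_m (- h j m) * P1 m)
  = \sum_b P1 b * (\sum_j D i j * h j b - \sum_m h i m * D b m)
  + \sum_l \sum_b u1 l * P0 b * (\sum_k K k i b * D k l - \sum_m h i m * W b m l
                                  - \sum_j D i j * K l j b).
Proof.
rewrite T1E T2E T3E.
under [X in _ = X + _]eq_bigr => b _ do rewrite mulrBr.
under [X in _ = _ + X]eq_bigr => l _ do under eq_bigr => b _ do rewrite !mulrBr.
under [X in _ = _ + X]eq_bigr => l _ do rewrite !sumrB.
rewrite !sumrB.
set A2 := \sum_b P1 b * _. set A3 := \sum_b P1 b * _.
set S1 := \sum_l _. set S2 := \sum_l _. set S3 := \sum_l _.
ring.
Qed.
End C.

Definition Kf (T : 'I_n -> 'I_n -> 'I_n -> R) (h : 'M[R]_n) l a b :=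
  \sum_c (\sum_d h a d * Tm T l d c) * h c b.

Lemma ellF_formula (V : 'I_n -> 'rV[R]_n -> R) (T : 'I_n -> 'I_n -> 'I_n -> R) (g0 : 'M[R]_n)
   i (u0 u1 P0 P1 : 'rV[R]_n) : gmetric T g0 u0 \in unitmx ->
  ellF_cov V (Cop (gmetric T g0)) i u0 u1 P0 P1 =
  \sum_b P1 0 b * (\sum_j pd (V i) j u0 * invmx (gmetric T g0 u0) j b
                   - \sum_m invmx (gmetric T g0 u0) i m * pd (V b) m u0)
  + \sum_l \sum_b u1 0 l * P0 0 b *
      (\sum_k Kf T (invmx (gmetric T g0 u0)) k i b * pd (V k) l u0
       - \sum_m invmx (gmetric T g0 u0) i m * pd (pd (V b) m) l u0
       - \sum_j pd (V i) j u0 * Kf T (invmx (gmetric T g0 u0)) l j b).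
Proof.
move=> gu.
rewrite -(regroup (invmx (gmetric T g0 u0)) (fun k l => pd (V k) l u0)
   (Kf T (invmx (gmetric T g0 u0))) (fun j m l => pd (pd (V j) m) l u0)
   (fun l => u1 0 l) (fun b => P0 0 b) (fun b => P1 0 b) i).
rewrite /ellF_cov /Dt_cov /Dx; congr (_ + _ - _).
- apply: eq_bigr => k _; rewrite pd_Cop_u //.
  have -> : \sum_j pd (fun _ : 'rV[R]_n => V k u0) j P0 * P1 0 j = \sum_j 0 * P1 0 j.
    by apply: eq_bigr => j _; rewrite pd_cst.
  by [].
- by apply: eq_bigr => m _; rewrite pd_Cop_P.
- apply: eq_bigr => j _; congr (_ * (_ + _)).
    by apply: eq_bigr => l _; rewrite pd_Cop_u.
  by apply: eq_bigr => m _; rewrite pd_Cop_P.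
Qed.

End A.
Arguments Kf {R n}. Arguments Tm {R n}.

Section D.
Set Implicit Arguments. Unset Strict Implicit.
Variables (R : realType) (n : nat).

Lemma entryB (A B : 'M[R]_n) i j : (A - B) i j = A i j - B i j.
Proof. by rewrite !mxE. Qed.

Lemma claimA (g : 'M[R]_n) (D : 'I_n -> 'I_n -> R) : g \in unitmx ->
  (forall i b, \sum_j D i j * invmx g j b - \sum_m invmx g i m * D b m = 0) ->
  g *m (\matrix_(i, j) D i j) = (\matrix_(i, j) D i j)^T *m g.
Proof.
move=> gu H.
set Dm : 'M[R]_n := \matrix_(i, j) D i j.
have eA : forall i b, \sum_j D i j * invmx g j b - \sum_m invmx g i m * D b m
    = (Dm *m invmx g - invmx g *m Dm^T) i b.
  by move=> i b; rewrite !mxE; congr (_ - _); apply: eq_bigr => j _; rewrite !mxE.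
have e : Dm *m invmx g = invmx g *m Dm^T.
  by apply/matrixP => i b; have := H i b; rewrite eA entryB => /eqP; rewrite subr_eq0 => /eqP.
by rewrite -[g *m Dm]mulmx1 -(mulVmx gu) mulmxA -(mulmxA g Dm) e !mulmxA mulmxV // mul1mx.
Qed.

Lemma claimA' (g : 'M[R]_n) (D : 'I_n -> 'I_n -> R) : g \in unitmx ->
  g *m (\matrix_(i, j) D i j) = (\matrix_(i, j) D i j)^T *m g ->
  (forall i b, \sum_j D i j * invmx g j b - \sum_m invmx g i m * D b m = 0).
Proof.
move=> gu e0.
set Dm : 'M[R]_n := \matrix_(i, j) D i j in e0.
have eA : forall i b, \sum_j D i j * invmx g j b - \sum_m invmx g i m * D b m
    = (Dm *m invmx g - invmx g *m Dm^T) i b.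
  by move=> i b; rewrite !mxE; congr (_ - _); apply: eq_bigr => j _; rewrite !mxE.
have e : Dm *m invmx g = invmx g *m Dm^T.
  by rewrite -[Dm *m _]mul1mx -(mulVmx gu) -!mulmxA (mulmxA g Dm) e0 -!mulmxA mulmxV // mulmx1.
by move=> i b; rewrite eA e subrr mxE.
Qed.

Lemma claimC (g : 'M[R]_n) (D : 'I_n -> 'I_n -> R) :
  (forall a b, g a b = - g b a) ->
  (g *m (\matrix_(i, j) D i j) = (\matrix_(i, j) D i j)^T *m g) <->
  (forall p q, \sum_j g q j * D j p + \sum_j g p j * D j q = 0).
Proof.
move=> sk.
set Dm : 'M[R]_n := \matrix_(i, j) D i j.
have eC : forall p q, \sum_j g q j * D j p + \sum_j g p j * D j q
    = (g *m Dm - Dm^T *m g) q p.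
  move=> p q; rewrite !mxE; congr (_ + _).
    by apply: eq_bigr => j _; rewrite !mxE.
  rewrite -sumrN; apply: eq_bigr => j _; rewrite !mxE (sk j p); ring.
split => H.
  by move=> p q; rewrite eC H subrr mxE.
by apply/matrixP => q p; have := H p q; rewrite eC entryB => /eqP; rewrite subr_eq0 => /eqP.
Qed.

Lemma KfE (T : 'I_n -> 'I_n -> 'I_n -> R) (h : 'M[R]_n) l a b :
  Kf T h l a b = (h *m Tm T l *m h) a b.
Proof. by rewrite /Kf mxE; apply: eq_bigr => c _; rewrite mxE. Qed.

Lemma sandwich (g X : 'M[R]_n) : g \in unitmx -> g *m (invmx g *m X *m invmx g) *m g = X.
Proof.
by move=> gu; rewrite !mulmxA mulmxV // mul1mx -mulmxA mulVmx // mulmx1.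
Qed.

Lemma sandwich2 (g X : 'M[R]_n) : g \in unitmx -> invmx g *m (g *m X *m g) *m invmx g = X.
Proof.
by move=> gu; rewrite !mulmxA mulVmx // mul1mx -mulmxA mulmxV // mulmx1.
Qed.

Lemma claim2 (g : 'M[R]_n) (D : 'I_n -> 'I_n -> R) (T : 'I_n -> 'I_n -> 'I_n -> R)
  (W : 'I_n -> 'I_n -> 'I_n -> R) : g \in unitmx ->
  (forall a b, g a b = - g b a) ->
  (forall i j k, T i j k = - T j i k) ->
  g *m (\matrix_(i, j) D i j) = (\matrix_(i, j) D i j)^T *m g ->
  (forall l i b, \sum_k Kf T (invmx g) k i b * D k l
       - \sum_m invmx g i m * W b m l
       - \sum_j D i j * Kf T (invmx g) l j b = 0) <->
  (forall p q l, \sum_k g q k * W k p l + \sum_k T p q k * D k l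
                 + \sum_k T q k l * D k p = 0).
Proof.
move=> gu sk hT eD.
set Dm : 'M[R]_n := \matrix_(i, j) D i j in eD.
set h := invmx g.
pose Wl l : 'M[R]_n := \matrix_(m, b) W b m l.
pose El l : 'M[R]_n := (\sum_k D k l *: (h *m Tm T k *m h)) - h *m Wl l
                       - Dm *m (h *m Tm T l *m h).
pose Cl l : 'M[R]_n := (\sum_k D k l *: Tm T k) - Wl l *m g - Dm^T *m Tm T l.
have eE : forall l i b, \sum_k Kf T h k i b * D k l
       - \sum_m h i m * W b m l - \sum_j D i j * Kf T h l j b = El l i b.
  move=> l i b; rewrite /El !entryB summxE; congr (_ - _ - _).
  - by apply: eq_bigr => k _; rewrite scale_entry KfE mulrC.
  - by rewrite mxE; apply: eq_bigr => m _; rewrite mxE.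
  - by rewrite mxE; apply: eq_bigr => j _; rewrite KfE !mxE.
have eC : forall l, g *m El l *m g = Cl l.
  move=> l; rewrite /El /Cl !mulmxBr !mulmxBl; congr (_ - _ - _).
  - rewrite mulmx_sumr mulmx_suml; apply: eq_bigr => k _.
    by rewrite -scalemxAr -scalemxAl sandwich.
  - by rewrite mulmxA mulmxV // mul1mx.
  - rewrite !mulmxA eD -(mulmxA _ g h) mulmxV // mulmx1.
    by rewrite -mulmxA mulVmx // mulmx1.
have eCe : forall p q l, Cl l p q = \sum_k g q k * W k p l + \sum_k T p q k * D k l
                 + \sum_k T q k l * D k p.
  move=> p q l; rewrite /Cl !entryB summxE.
  have a : \sum_k (D k l *: Tm T k) p q = \sum_k T p q k * D k l.
    by apply: eq_bigr => k _; rewrite scale_entry mxE mulrC.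
  have b : (Wl l *m g) p q = - \sum_k g q k * W k p l.
    by rewrite mxE -sumrN; apply: eq_bigr => k _; rewrite mxE (sk k q); ring.
  have c : (Dm^T *m Tm T l) p q = - \sum_k T q k l * D k p.
    by rewrite mxE -sumrN; apply: eq_bigr => k _; rewrite !mxE (hT k q l); ring.
  rewrite a b c; ring.
split => H.
  move=> p q l; rewrite -eCe -eC.
  have -> : El l = 0 by apply/matrixP => i b; rewrite -eE H mxE.
  by rewrite mulmx0 mul0mx mxE.
move=> l i b; rewrite eE.
have -> : El l = 0.
  have z : Cl l = 0 by apply/matrixP => p q; rewrite eCe H mxE.
  by rewrite -[El l](@sandwich2 g _ gu) eC z mulmx0 mul0mx.
by rewrite mxE.
Qed.


Lemma sum_dL (X : 'I_n -> R) b : \sum_j (delta_mx 0 b : 'rV[R]_n) 0 j * X j = X b.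
Proof. by under eq_bigr => j _ do rewrite mulrC; exact: sum_delta. Qed.

Lemma row0E (l : 'I_n) : (0 : 'rV[R]_n) 0 l = 0.
Proof. by rewrite mxE. Qed.

Lemma gskew (T : 'I_n -> 'I_n -> 'I_n -> R) (g0 : 'M[R]_n) u :
  (forall i j k, T i j k = - T j i k) -> (forall i j, g0 i j = - g0 j i) ->
  forall a b, gmetric T g0 u a b = - gmetric T g0 u b a.
Proof.
move=> hT hg a b; rewrite !mxE opprD hg -sumrN; congr (_ + _).
by apply: eq_bigr => k _; rewrite hT mulNr.
Qed.

End D.


Theorem mainTheorem5 (R : realType) (n : nat) (hn : (1 <= n)%N)
  (V : 'I_n -> 'rV[R]_n -> R) (hV : forall i, smooth (V i))
  (T : 'I_n -> 'I_n -> 'I_n -> R) (g0 : 'M[R]_n)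
  (hT12 : forall i j k, T i j k = - T j i k)
  (hT23 : forall i j k, T i j k = - T i k j)
  (hT13 : forall i j k, T i j k = - T k j i)
  (hg0 : forall i j, g0 i j = - g0 j i)
  (hnd : exists u : 'rV[R]_n, gmetric T g0 u \in unitmx) :
  (forall (u0 u1 P0 P1 : 'rV[R]_n), gmetric T g0 u0 \in unitmx ->
     forall i : 'I_n, ellF_cov V (Cop (gmetric T g0)) i u0 u1 P0 P1 = 0)
  <->
  (forall u : 'rV[R]_n, gmetric T g0 u \in unitmx ->
     (forall p q : 'I_n,
        \sum_(j < n) gmetric T g0 u q j * pd (V j) p u
        + \sum_(j < n) gmetric T g0 u p j * pd (V j) q u = 0)
     /\
     (forall p q l : 'I_n,
        \sum_(k < n) gmetric T g0 u q k * pd (pd (V k) p) l u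
        + \sum_(k < n) pd (fun v => gmetric T g0 v p q) k u * pd (V k) l u
        + \sum_(k < n) pd (fun v => gmetric T g0 v q k) l u * pd (V k) p u
        = 0)).
Proof.
have pdg : forall u p q k, pd (fun v => gmetric T g0 v p q) k u = T p q k.
  by move=> u p q k; rewrite pd_gmetric.
split.
- move=> H u gu.
  have sk := gskew u hT12 hg0.
  have A0 : forall i b, \sum_j pd (V i) j u * invmx (gmetric T g0 u) j b
      - \sum_m invmx (gmetric T g0 u) i m * pd (V b) m u = 0.
    move=> i b; have := H u 0 0 (delta_mx 0 b) gu i; rewrite ellF_formula //.
    rewrite sum_dL [X in _ + X]big1 ?addr0 // => l _; rewrite big1 // => c _.
    by rewrite !row0E !mul0r.
  have eD := claimA gu A0.
  split; first exact: (proj1 (claimC _ sk) eD).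
  move=> p q l.
  under [X in _ + X + _ = _]eq_bigr => k _ do rewrite pdg.
  under [X in _ + X = _]eq_bigr => k _ do rewrite pdg.
  move: p q l; apply: (proj1 (claim2 (fun k p l => pd (pd (V k) p) l u) gu sk hT12 eD)).
  move=> l i b; have := H u (delta_mx 0 l) (delta_mx 0 b) 0 gu i.
  rewrite ellF_formula // big1 ?add0r; last by move=> c _; rewrite row0E mul0r.
  under eq_bigr => l' _ do under eq_bigr => b' _ do rewrite -mulrA.
  under eq_bigr => l' _ do rewrite -mulr_sumr sum_dL.
  by rewrite sum_dL.
- move=> H u0 u1 P0 P1 gu i.
  have sk := gskew u0 hT12 hg0.
  have [c1 c2] := H u0 gu.
  have eD := proj2 (claimC _ sk) c1.
  have A0 := claimA' gu eD.
  have E0 := proj2 (claim2 (fun k p l => pd (pd (V k) p) l u0) gu sk hT12 eD).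
  rewrite ellF_formula // big1 ?add0r; last by move=> b _; rewrite A0 mulr0.
  rewrite big1 // => l _; rewrite big1 // => b _; rewrite E0 ?mulr0 //.
  move=> p q l'; have := c2 p q l'.
  under [X in _ + X + _ = _ -> _]eq_bigr => k _ do rewrite pdg.
  by under [X in _ + X = _ -> _]eq_bigr => k _ do rewrite pdg.
Qed.
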